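(* Let $\kappa:=\sup_{x\in X}\sqrt{K(x,x)}<\infty$ and $|V|_0:=\sup_{y\in Y}V(y,0)<\infty$. Assume that for every $y\in Y$ the function $V(y,\cdot)$ is differentiable with derivative $V'(y,\cdot)$ Lipschitz with constant $L>0$, and that $0<\eta_t\le(L\kappa^2)^{-1}$ for all $t$. Then for every $t\ge1$, $\|f_{t+1}\|_K\le\sqrt{2|V|_0\sum_{k=1}^t\eta_k}$. In particular, if $\eta_t=\eta_1t^{-\theta}$ with $\theta\in[0,1)$ and $0<\eta_1\le\min\{\frac{1-\theta}{2|V|_0},(L\kappa^2)^{-1}\}$, then $\|f_{t+1}\|_K\le t^{\frac{1-\theta}{2}}$ for every $t\ge1$.
   Context: Setting. $X$ is a separable metric space, $Y\subseteq\mathbb{R}$, and $V:\mathbb{R}\times\mathbb{R}\to[0,\infty)$ is a measurable loss, convex in its second argument. A sample $\mathbf{z}=\{(x_i,y_i)\}_{i=1}^m\subset X\times Y$ is given, and $\mathcal{E}_{\mathbf z}(f)=\frac1m\sum_{i=1}^m V(y_i,f(x_i))$ is the empirical risk. $K:X\times X\to\mathbb{R}$ is a reproducing kernel with reproducing kernel Hilbert space $(\mathcal{H}_K,\|\cdot\|_K)$, $K_x=K(x,\cdot)$. Given step sizes $\eta_t>0$, the iterates are $f_1=0$ and $f_{t+1}=f_t-\eta_t\frac1m\sum_{j=1}^m V'(y_j,f_t(x_j))K_{x_j}$, $t\ge1$ (here $V'$ is the derivative in the second argument). *)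

(* Defs.v *)
From Stdlib Require Import Reals Lra.
Open Scope R_scope.

Fixpoint sum_lt (n : nat) (a : nat -> R) : R :=
  match n with
  | O => 0
  | S k => sum_lt k a + a k
  end.

Definition is_reproducing_kernel {X : Type} (K : X -> X -> R) : Prop :=
  (forall u v, K u v = K v u) /\
  (forall (n : nat) (c : nat -> R) (p : nat -> X),
      0 <= sum_lt n (fun i => sum_lt n (fun j => c i * c j * K (p i) (p j)))).

(* The function f = sum_{j<m} a_j K_{x_j} of H_K, evaluated at z. *)
Definition kerEval {X : Type} (K : X -> X -> R) (x : nat -> X) (m : nat)
  (a : nat -> R) (z : X) : R :=
  sum_lt m (fun j => a j * K (x j) z).

Definition rkhs_norm {X : Type} (K : X -> X -> R) (x : nat -> X) (m : nat)
  (a : nat -> R) : R :=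
  sqrt (sum_lt m (fun i => sum_lt m (fun j => a i * a j * K (x i) (x j)))).

(* Coefficients of the gradient-descent iterates:
   gd_coef t = coefficients of f_{t+1} in the span of K_{x_0},...,K_{x_{m-1}}.
   f_1 = 0, f_{t+1} = f_t - eta_t (1/m) sum_j V'(y_j, f_t(x_j)) K_{x_j}. *)
Fixpoint gd_coef {X : Type} (K : X -> X -> R) (V' : R -> R -> R)
  (x : nat -> X) (y : nat -> R) (m : nat) (eta : nat -> R) (t : nat)
  : nat -> R :=
  match t with
  | O => fun _ => 0
  | S n =>
      let a := gd_coef K V' x y m eta n in
      fun j => a j - eta (S n) / INR m * V' (y j) (kerEval K x m a (x j))
  end.

(* Main.v *)
Require Import Defs.
From Stdlib Require Import Reals Lra Lia Psatz.
Open Scope R_scope.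

Lemma sum_lt_ext n f g : (forall i, (i < n)%nat -> f i = g i) -> sum_lt n f = sum_lt n g.
Proof. induction n; simpl; intros H; [reflexivity|]. rewrite IHn by (intros; apply H; lia). rewrite H by lia. reflexivity. Qed.

Lemma sum_lt_le n f g : (forall i, (i < n)%nat -> f i <= g i) -> sum_lt n f <= sum_lt n g.
Proof. induction n; simpl; intros H; [lra|]. assert (H1 := H n ltac:(lia)). assert (sum_lt n f <= sum_lt n g) by (apply IHn; intros; apply H; lia). lra. Qed.

Lemma sum_lt_lin2 n f g c : sum_lt n (fun i => f i + c * g i) = sum_lt n f + c * sum_lt n g.
Proof. induction n; simpl; [ring|]. rewrite IHn. ring. Qed.

Lemma sum_lt_scal n f c : sum_lt n (fun i => c * f i) = c * sum_lt n f.
Proof. induction n; simpl; [ring|]. rewrite IHn. ring. Qed.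

Lemma sum_lt_plus n f g : sum_lt n (fun i => f i + g i) = sum_lt n f + sum_lt n g.
Proof. induction n; simpl; [ring|]. rewrite IHn. ring. Qed.

Lemma sum_lt_const n c : sum_lt n (fun _ => c) = INR n * c.
Proof. induction n; simpl sum_lt; [simpl; ring|]. rewrite IHn, S_INR. ring. Qed.

Lemma sum_lt_swap n p (F : nat -> nat -> R) :
  sum_lt n (fun i => sum_lt p (fun j => F i j)) = sum_lt p (fun j => sum_lt n (fun i => F i j)).
Proof.
  induction n; simpl.
  - rewrite sum_lt_const. ring.
  - rewrite IHn. rewrite <- sum_lt_plus. reflexivity.
Qed.

Lemma quad_disc A B C : 0 <= C -> (forall s, 0 <= A + 2 * s * B + s ^ 2 * C) -> B ^ 2 <= A * C.
Proof.
  intros HC H. destruct (Rle_lt_or_eq_dec 0 C HC) as [Cp|C0].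
  - specialize (H (- B / C)).
    assert (E: A + 2 * (- B / C) * B + (- B / C) ^ 2 * C = (A * C - B ^ 2) / C) by (field; lra).
    rewrite E in H. assert (0 <= A*C - B^2); [|lra].
    apply Rmult_le_reg_r with (/C). apply Rinv_0_lt_compat; lra.
    rewrite Rmult_0_l. exact H.
  - subst C. assert (HA := H 0). destruct (Req_dec B 0) as [B0|B0].
    + subst; nra.
    + specialize (H (- (A + 1) / (2 * B))).
      assert (E: A + 2 * (- (A + 1) / (2 * B)) * B + (- (A + 1) / (2 * B)) ^ 2 * 0 = -1) by (field; lra).
      lra.
Qed.

Lemma first_order (V V' : R -> R -> R) b
  (HVconv : forall a u v l, 0 <= l <= 1 -> V a (l * u + (1 - l) * v) <= l * V a u + (1 - l) * V a v)
  (Hd : forall u, derivable_pt_lim (V b) u (V' b u)) u v :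
  V b u + V' b u * (v - u) <= V b v.
Proof.
  destruct (Req_dec v u) as [E|Hne]. { subst. lra. }
  apply Rnot_lt_le. intro Hlt.
  set (d := v - u).
  assert (dpos : 0 < Rabs d) by (apply Rabs_pos_lt; unfold d; lra).
  set (eps := (V' b u * d - (V b v - V b u)) / Rabs d).
  assert (epos : 0 < eps) by (unfold eps; apply Rdiv_lt_0_compat; unfold d in *; lra).
  destruct (Hd u eps epos) as [del Hdel].
  set (l := Rmin 1 (del / (2 * Rabs d))).
  assert (lpos : 0 < l). { unfold l. apply Rmin_pos; [lra|]. apply Rdiv_lt_0_compat; [apply cond_pos|lra]. }
  assert (l1 : l <= 1) by apply Rmin_l.
  assert (l2 : l <= del / (2 * Rabs d)) by apply Rmin_r.
  assert (hne : l * d <> 0). { apply Rmult_integral_contrapositive. split; [lra|]. unfold d; lra. }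
  assert (hlt : Rabs (l * d) < del).
  { rewrite Rabs_mult, (Rabs_right l) by lra.
    assert (l * Rabs d <= del / (2 * Rabs d) * Rabs d) by (apply Rmult_le_compat_r; lra).
    assert (del / (2 * Rabs d) * Rabs d = del / 2) by (field; lra).
    pose proof (cond_pos del). lra. }
  specialize (Hdel (l * d) hne hlt).
  set (q := (V b (u + l * d) - V b u) / (l * d)) in Hdel.
  assert (Eq : V b (u + l * d) - V b u = l * d * q) by (unfold q; field; split; [unfold d; lra | lra]).
  assert (Cv : V b (u + l * d) <= l * V b v + (1 - l) * V b u).
  { replace (u + l * d) with (l * v + (1 - l) * u) by (unfold d; ring). apply HVconv. lra. }
  assert (K1 : d * q <= V b v - V b u).
  { apply Rmult_le_reg_l with l; [lra|]. nra. }
  assert (K2 : Rabs (d * (q - V' b u)) < Rabs d * eps).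
  { rewrite Rabs_mult. apply Rmult_lt_compat_l; assumption. }
  assert (K3 : Rabs d * eps = V' b u * d - (V b v - V b u)) by (unfold eps; field; lra).
  assert (K4 := Rle_abs (- (d * (q - V' b u)))). rewrite Rabs_Ropp in K4.
  nra.
Qed.

Lemma dlim_eq f x l l' : l = l' -> derivable_pt_lim f x l -> derivable_pt_lim f x l'.
Proof. intros ->; auto. Qed.

Lemma descent (V V' : R -> R -> R) b L
  (Hd : forall u, derivable_pt_lim (V b) u (V' b u))
  (HLip : forall u v, Rabs (V' b u - V' b v) <= L * Rabs (u - v)) u v :
  V b v <= V b u + V' b u * (v - u) + L / 2 * (v - u) ^ 2.
Proof.
  set (phi := fun w => V b w - V' b u * (w - u) - L / 2 * (w - u) ^ 2).
  set (phi' := fun w => V' b w - V' b u - L * (w - u)).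
  assert (Dphi : forall c, derivable_pt_lim phi c (phi' c)).
  { intro c. unfold phi, phi'.
    assert (D2 : derivable_pt_lim (fun w => (w - u) ^ 2) c (2 * (c - u))).
    { apply (dlim_eq _ _ (INR 2 * (c - u) ^ pred 2 * (1 - 0))).
      { simpl. ring. }
      apply (derivable_pt_lim_comp (fun w => w - u) (fun z => z ^ 2)).
      apply derivable_pt_lim_minus. apply derivable_pt_lim_id. apply derivable_pt_lim_const.
      apply derivable_pt_lim_pow. }
    assert (D1 : derivable_pt_lim (fun w => V' b u * (w - u)) c (V' b u * (1 - 0))).
    { apply derivable_pt_lim_scal. apply derivable_pt_lim_minus. apply derivable_pt_lim_id. apply derivable_pt_lim_const. }
    apply (dlim_eq _ _ (V' b c - V' b u * (1 - 0) - L / 2 * (2 * (c - u)))). { field. }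
    apply derivable_pt_lim_minus. apply derivable_pt_lim_minus. apply Hd. exact D1.
    apply derivable_pt_lim_scal. exact D2. }
  assert (phi v <= phi u).
  { destruct (Rtotal_order u v) as [H|[H|H]].
    - destruct (MVT_cor2 phi phi' u v H (fun c _ => Dphi c)) as [c [Ec Hc]].
      enough (phi' c * (v - u) <= 0) by lra. unfold phi'.
      pose proof (HLip c u). pose proof (Rle_abs (V' b c - V' b u)).
      rewrite (Rabs_right (c - u)) in H0 by lra. nra.
    - subst; lra.
    - destruct (MVT_cor2 phi phi' v u H (fun c _ => Dphi c)) as [c [Ec Hc]].
      enough (0 <= phi' c * (u - v)) by lra. unfold phi'.
      pose proof (HLip c u). pose proof (Rle_abs (- (V' b c - V' b u))). rewrite Rabs_Ropp in H1.
      rewrite (Rabs_left (c - u)) in H0 by lra. nra. }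
  unfold phi in H. replace ((u-u)^2) with 0 in H by ring. lra.
Qed.

Definition Qf {X : Type} (K : X -> X -> R) (x : nat -> X) m (a : nat -> R) :=
  sum_lt m (fun i => sum_lt m (fun j => a i * a j * K (x i) (x j))).

Lemma sum_lt_lin4 n f1 f2 f3 f4 c2 c3 c4 :
  sum_lt n (fun i => f1 i + c2 * f2 i + c3 * f3 i + c4 * f4 i)
  = sum_lt n f1 + c2 * sum_lt n f2 + c3 * sum_lt n f3 + c4 * sum_lt n f4.
Proof. induction n; simpl; [ring|]. rewrite IHn. ring. Qed.

Lemma dsum_lin4 n (f1 f2 f3 f4 : nat -> nat -> R) c2 c3 c4 :
  sum_lt n (fun i => sum_lt n (fun j => f1 i j + c2 * f2 i j + c3 * f3 i j + c4 * f4 i j))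
  = sum_lt n (fun i => sum_lt n (f1 i)) + c2 * sum_lt n (fun i => sum_lt n (f2 i))
    + c3 * sum_lt n (fun i => sum_lt n (f3 i)) + c4 * sum_lt n (fun i => sum_lt n (f4 i)).
Proof.
  rewrite <- sum_lt_lin4. apply sum_lt_ext. intros i _. apply sum_lt_lin4.
Qed.

Lemma bil_swap {X : Type} (K : X -> X -> R) x m u v :
  sum_lt m (fun i => sum_lt m (fun j => v i * u j * K (x i) (x j)))
  = sum_lt m (fun j => u j * kerEval K x m v (x j)).
Proof.
  rewrite sum_lt_swap. apply sum_lt_ext. intros j _. unfold kerEval.
  rewrite <- sum_lt_scal. apply sum_lt_ext. intros; ring.
Qed.

Lemma bil_sym {X : Type} (K : X -> X -> R) x m u v (Hs : forall a b, K a b = K b a) :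
  sum_lt m (fun i => sum_lt m (fun j => u i * v j * K (x i) (x j)))
  = sum_lt m (fun i => u i * kerEval K x m v (x i)).
Proof.
  apply sum_lt_ext. intros i _. unfold kerEval.
  rewrite <- sum_lt_scal. apply sum_lt_ext. intros j _. rewrite (Hs (x i) (x j)). ring.
Qed.

Lemma Qf_expand {X : Type} (K : X -> X -> R) x m a w c (Hs : forall a b, K a b = K b a) :
  Qf K x m (fun j => a j - c * w j)
  = Qf K x m a - 2 * c * sum_lt m (fun j => w j * kerEval K x m a (x j)) + c ^ 2 * Qf K x m w.
Proof.
  unfold Qf.
  transitivity (sum_lt m (fun i => sum_lt m (fun j =>
     a i * a j * K (x i) (x j) + (- c) * (a i * w j * K (x i) (x j))
     + (- c) * (w i * a j * K (x i) (x j)) + c ^ 2 * (w i * w j * K (x i) (x j))))).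
  { apply sum_lt_ext; intros i _; apply sum_lt_ext; intros j _; ring. }
  rewrite (dsum_lin4 m (fun i j => a i * a j * K (x i) (x j)) (fun i j => a i * w j * K (x i) (x j))
    (fun i j => w i * a j * K (x i) (x j)) (fun i j => w i * w j * K (x i) (x j))).
  rewrite (bil_swap K x m w a). rewrite (bil_sym K x m w a Hs). ring.
Qed.

Lemma kerEval_lin {X : Type} (K : X -> X -> R) x m a w c z :
  kerEval K x m (fun j => a j - c * w j) z = kerEval K x m a z - c * kerEval K x m w z.
Proof.
  unfold kerEval. rewrite <- (sum_lt_scal m _ c). replace (sum_lt m (fun j => a j * K (x j) z) -
   sum_lt m (fun i => c * (w i * K (x i) z))) with
   (sum_lt m (fun j => a j * K (x j) z) + (-1) * sum_lt m (fun i => c * (w i * K (x i) z))) by ring.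
  rewrite <- sum_lt_lin2. apply sum_lt_ext. intros; ring.
Qed.

Lemma Qf_nonneg {X : Type} (K : X -> X -> R) x m a : is_reproducing_kernel K -> 0 <= Qf K x m a.
Proof. intros [_ H]. apply H. Qed.

Lemma Kdiag_nonneg {X : Type} (K : X -> X -> R) z : is_reproducing_kernel K -> 0 <= K z z.
Proof. intros [_ H]. specialize (H 1%nat (fun _ => 1) (fun _ => z)). simpl in H. lra. Qed.

Lemma CS {X : Type} (K : X -> X -> R) x m w z : is_reproducing_kernel K ->
  (kerEval K x m w z) ^ 2 <= K z z * Qf K x m w.
Proof.
  intros HK. rewrite Rmult_comm. apply quad_disc. apply Kdiag_nonneg; auto.
  intro s. destruct HK as [Hs Hp].
  set (c := fun i => if Nat.ltb i m then w i else s).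
  set (p := fun i => if Nat.ltb i m then x i else z).
  assert (Hc : forall i, (i < m)%nat -> c i = w i).
  { intros i Hi. unfold c. apply Nat.ltb_lt in Hi. rewrite Hi. reflexivity. }
  assert (Hpi : forall i, (i < m)%nat -> p i = x i).
  { intros i Hi. unfold p. apply Nat.ltb_lt in Hi. rewrite Hi. reflexivity. }
  assert (Hcm : c m = s) by (unfold c; rewrite Nat.ltb_irrefl; reflexivity).
  assert (Hpm : p m = z) by (unfold p; rewrite Nat.ltb_irrefl; reflexivity).
  specialize (Hp (S m) c p). cbn [sum_lt] in Hp.
  assert (E : sum_lt m (fun i => sum_lt m (fun j => c i * c j * K (p i) (p j)) + c i * c m * K (p i) (p m)) +
      (sum_lt m (fun j => c m * c j * K (p m) (p j)) + c m * c m * K (p m) (p m))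
     = sum_lt m (fun i => sum_lt m (fun j => w i * w j * K (x i) (x j)) + s * (w i * K (x i) z)) +
      (s * sum_lt m (fun j => w j * K (x j) z) + s * s * K z z)).
  { f_equal.
    - apply sum_lt_ext. intros i Hi. rewrite (Hc i Hi), (Hpi i Hi), Hcm, Hpm. f_equal.
      + apply sum_lt_ext. intros j Hj. rewrite (Hc j Hj), (Hpi j Hj). reflexivity.
      + ring.
    - rewrite <- sum_lt_scal. rewrite Hcm, Hpm. f_equal. apply sum_lt_ext. intros j Hj.
      rewrite (Hc j Hj), (Hpi j Hj), (Hs z (x j)). ring. }
  rewrite E, sum_lt_lin2 in Hp. unfold Qf, kerEval. lra.
Qed.

Lemma sum_lt_lin3 n f g h c2 c3 :
  sum_lt n (fun i => f i + c2 * g i + c3 * h i) = sum_lt n f + c2 * sum_lt n g + c3 * sum_lt n h.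
Proof. induction n; simpl; [ring|]. rewrite IHn. ring. Qed.

Lemma step {X : Type} (Y : R -> Prop) (K : X -> X -> R) (V V' : R -> R -> R) m x y L kappa V0
  (HK : is_reproducing_kernel K) (Hm : (1 <= m)%nat)
  (HyY : forall i, (i < m)%nat -> Y (y i))
  (HVnn : forall a b, 0 <= V a b)
  (HVconv : forall a u v l, 0 <= l <= 1 ->
      V a (l * u + (1 - l) * v) <= l * V a u + (1 - l) * V a v)
  (Hkap : forall z, K z z <= kappa ^ 2)
  (HV0 : forall i, (i < m)%nat -> V (y i) 0 <= V0)
  (Hder : forall b, Y b -> forall u, derivable_pt_lim (V b) u (V' b u))
  (HLip : forall b, Y b -> forall u v, Rabs (V' b u - V' b v) <= L * Rabs (u - v))
  (HL : 0 < L) eta (He : 0 < eta) (HeL : L * kappa ^ 2 * eta <= 1) a :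
  Qf K x m (fun j => a j - eta / INR m * V' (y j) (kerEval K x m a (x j))) <= Qf K x m a + 2 * eta * V0.
Proof.
  set (w := fun j => V' (y j) (kerEval K x m a (x j))).
  set (c := eta / INR m).
  assert (mpos : 0 < INR m) by (apply lt_0_INR; lia).
  assert (cpos : 0 < c) by (unfold c; apply Rdiv_lt_0_compat; lra).
  assert (ce : c * INR m = eta) by (unfold c; field; lra).
  change (Qf K x m (fun j => a j - c * w j) <= Qf K x m a + 2 * eta * V0).
  rewrite (Qf_expand K x m a w c (proj1 HK)).
  set (F := fun j => kerEval K x m a (x j)).
  set (G := fun j => kerEval K x m w (x j)).
  set (Qw := Qf K x m w).
  assert (Qwn : 0 <= Qw) by (apply Qf_nonneg; auto).
  set (A := sum_lt m (fun j => V (y j) (F j))).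
  set (A' := sum_lt m (fun j => V (y j) (F j - c * G j))).
  set (Z := sum_lt m (fun j => V (y j) 0)).
  set (BW := sum_lt m (fun j => w j * F j)).
  assert (H3 : A + (-1) * BW <= Z).
  { unfold A, BW. rewrite <- sum_lt_lin2. apply sum_lt_le. intros j Hj.
    pose proof (first_order V V' (y j) HVconv (Hder _ (HyY j Hj)) (F j) 0). unfold w, F in *. lra. }
  assert (HQw : sum_lt m (fun j => w j * G j) = Qw).
  { unfold Qw, Qf, G. rewrite (bil_sym K x m w w (proj1 HK)). reflexivity. }
  assert (H1 : A' <= A + (- c) * sum_lt m (fun j => w j * G j) + (L / 2 * c ^ 2) * sum_lt m (fun j => G j ^ 2)).
  { unfold A, A'. rewrite <- sum_lt_lin3. apply sum_lt_le. intros j Hj.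
    pose proof (descent V V' (y j) L (Hder _ (HyY j Hj)) (HLip _ (HyY j Hj)) (F j) (F j - c * G j)).
    unfold w, F in *. 
    replace (F j - c * G j - F j) with (- c * G j) in H by (unfold F; ring).
    replace ((- c * G j) ^ 2) with (c ^ 2 * G j ^ 2) in H by ring. lra. }
  rewrite HQw in H1.
  assert (HG : sum_lt m (fun j => G j ^ 2) <= sum_lt m (fun _ => kappa ^ 2 * Qw)).
  { apply sum_lt_le. intros j _. unfold G. eapply Rle_trans. apply CS; auto.
    apply Rmult_le_compat_r; auto. }
  rewrite sum_lt_const in HG.
  assert (HZ : Z <= sum_lt m (fun _ => V0)) by (apply sum_lt_le; auto).
  rewrite sum_lt_const in HZ.
  assert (HA' : 0 <= A').
  { replace 0 with (sum_lt m (fun _ => 0)) by (rewrite sum_lt_const; ring). apply sum_lt_le. auto. }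
  assert (T1 : (L / 2 * c ^ 2) * sum_lt m (fun j => G j ^ 2) <= c * Qw / 2).
  { eapply Rle_trans. apply Rmult_le_compat_l. pose proof (Rle_0_sqr c). unfold Rsqr in *. nra. exact HG.
    replace (L / 2 * c ^ 2 * (INR m * (kappa ^ 2 * Qw))) with (c * Qw / 2 * (L * kappa ^ 2 * (c * INR m))) by field.
    rewrite ce. assert (0 <= c * Qw / 2) by nra. nra. }
  assert (T2 : c * Qw <= 2 * (A - A')) by lra.
  assert (T3 : c ^ 2 * Qw <= 2 * c * (A - A')) by nra.
  assert (T4 : - 2 * c * BW <= 2 * c * (Z - A)) by nra.
  assert (T5 : 2 * c * Z <= 2 * eta * V0).
  { rewrite <- ce. nra. }
  assert (T6 : 0 <= 2 * c * A') by nra.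
  change (sum_lt m (fun j : nat => w j * kerEval K x m a (x j))) with BW. lra.
Qed.

Lemma Rpower_pos' a b : 0 < Rpower a b.
Proof. unfold Rpower. apply exp_pos. Qed.

Lemma Rpower_1_l' b : Rpower 1 b = 1.
Proof. unfold Rpower. rewrite ln_1, Rmult_0_r, exp_0. reflexivity. Qed.

Lemma inv_bound c e : 0 <= c -> e <= / c -> c * e <= 1.
Proof.
  intros Hc He. destruct (Rle_lt_or_eq_dec 0 c Hc) as [Cp|C0].
  - replace 1 with (c * / c) by (field; lra). apply Rmult_le_compat_l; lra.
  - subst. lra.
Qed.

Lemma key_step th s : 0 <= th < 1 -> 1 <= s ->
  Rpower s (1 - th) + (1 - th) * Rpower (s + 1) (- th) <= Rpower (s + 1) (1 - th).
Proof.
  intros Hth Hs.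
  assert (Hd : forall c, s <= c <= s + 1 ->
     derivable_pt_lim (fun z => Rpower z (1 - th)) c ((1 - th) * Rpower c (1 - th - 1))).
  { intros c Hc. apply derivable_pt_lim_power. lra. }
  destruct (MVT_cor2 (fun z => Rpower z (1 - th)) (fun c => (1 - th) * Rpower c (1 - th - 1)) s (s + 1)
     ltac:(lra) Hd) as [c [Ec Hc]].
  replace (1 - th - 1) with (- th) in Ec by ring.
  assert (Hm : Rpower (s + 1) (- th) <= Rpower c (- th)).
  { rewrite !Rpower_Ropp. apply Rinv_le_contravar. apply Rpower_pos'.
    apply Rle_Rpower_l; lra. }
  replace (s + 1 - s) with 1 in Ec by ring.
  assert ((1 - th) * Rpower (s + 1) (- th) <= (1 - th) * Rpower c (- th)) by (apply Rmult_le_compat_l; lra). lra.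
Qed.

Lemma sum_pow_bound th : 0 <= th < 1 -> forall t, (1 <= t)%nat ->
  sum_lt t (fun k => Rpower (INR (S k)) (- th)) <= Rpower (INR t) (1 - th) / (1 - th).
Proof.
  intros Hth t Ht. induction Ht.
  - simpl. rewrite Rpower_1_l', Rpower_1_l'.
    apply Rmult_le_reg_r with (1 - th); [lra|]. unfold Rdiv. rewrite Rmult_assoc, Rinv_l by lra. lra.
  - cbn [sum_lt]. assert (Hm1 : 1 <= INR m) by (replace 1 with (INR 1) by reflexivity; apply le_INR; lia).
    pose proof (key_step th (INR m) Hth Hm1). rewrite S_INR.
    apply Rmult_le_reg_r with (1 - th); [lra|].
    rewrite Rmult_plus_distr_r. unfold Rdiv. rewrite !Rmult_assoc, Rinv_l by lra.
    assert (IH := Rmult_le_compat_r (1 - th) _ _ ltac:(lra) IHHt).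
    unfold Rdiv in IH. rewrite Rmult_assoc, Rinv_l in IH by lra. lra.
Qed.

Theorem mainTheorem15
  (X : Type) (Y : R -> Prop) (K : X -> X -> R) (V V' : R -> R -> R)
  (m : nat) (x : nat -> X) (y : nat -> R) (L kappa V0 : R)
  (HK : is_reproducing_kernel K)
  (Hm : (1 <= m)%nat)
  (HyY : forall i, (i < m)%nat -> Y (y i))
  (HVnn : forall a b, 0 <= V a b)
  (HVconv : forall a u v l, 0 <= l <= 1 ->
      V a (l * u + (1 - l) * v) <= l * V a u + (1 - l) * V a v)
  (Hkappa : is_lub (fun r => exists z : X, r = sqrt (K z z)) kappa)
  (HV0 : is_lub (fun r => exists b, Y b /\ r = V b 0) V0)
  (Hder : forall b, Y b -> forall u, derivable_pt_lim (V b) u (V' b u))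
  (HL : 0 < L)
  (HLip : forall b, Y b -> forall u v, Rabs (V' b u - V' b v) <= L * Rabs (u - v)) :
  (forall eta : nat -> R,
      (forall t, (1 <= t)%nat -> 0 < eta t /\ eta t <= / (L * kappa ^ 2)) ->
      forall t, (1 <= t)%nat ->
        rkhs_norm K x m (gd_coef K V' x y m eta t)
          <= sqrt (2 * V0 * sum_lt t (fun k => eta (S k))))
  /\
  (forall (eta1 theta : R) (eta : nat -> R),
      0 <= theta < 1 ->
      0 < eta1 ->
      2 * V0 * eta1 <= 1 - theta ->
      eta1 <= / (L * kappa ^ 2) ->
      (forall t, (1 <= t)%nat -> eta t = eta1 * Rpower (INR t) (- theta)) ->
      forall t, (1 <= t)%nat ->
        rkhs_norm K x m (gd_coef K V' x y m eta t)
          <= Rpower (INR t) ((1 - theta) / 2)).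
Proof.
  assert (Hkap : forall z, K z z <= kappa ^ 2).
  { intro z. assert (H1 : sqrt (K z z) <= kappa) by (apply (proj1 Hkappa); exists z; reflexivity).
    pose proof (sqrt_sqrt (K z z) (Kdiag_nonneg K z HK)). pose proof (sqrt_pos (K z z)). nra. }
  assert (HV0' : forall i, (i < m)%nat -> V (y i) 0 <= V0).
  { intros i Hi. apply (proj1 HV0). exists (y i). split; auto. }
  assert (V0nn : 0 <= V0) by (pose proof (HV0' 0%nat ltac:(lia)); pose proof (HVnn (y 0%nat) 0); lra).
  assert (Part1 : forall eta : nat -> R,
      (forall t, (1 <= t)%nat -> 0 < eta t /\ eta t <= / (L * kappa ^ 2)) ->
      forall t, (1 <= t)%nat ->
        rkhs_norm K x m (gd_coef K V' x y m eta t)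
          <= sqrt (2 * V0 * sum_lt t (fun k => eta (S k)))).
  { intros eta Heta.
    assert (Ind : forall t, Qf K x m (gd_coef K V' x y m eta t) <= 2 * V0 * sum_lt t (fun k => eta (S k))).
    { induction t.
      - cbn [gd_coef sum_lt]. unfold Qf.
        rewrite (sum_lt_ext m _ (fun _ => 0)). rewrite sum_lt_const. lra.
        intros i _. rewrite (sum_lt_ext m _ (fun _ => 0)). rewrite sum_lt_const. ring.
        intros; ring.
      - cbn [gd_coef sum_lt]. cbv zeta.
        destruct (Heta (S t) ltac:(lia)) as [He1 He2].
        assert (HeL : L * kappa ^ 2 * eta (S t) <= 1) by (apply inv_bound; [nra|exact He2]).
        eapply Rle_trans.
        apply (step Y K V V' m x y L kappa V0 HK Hm HyY HVnn HVconv Hkap HV0' Hder HLip HL (eta (S t)) He1 HeL).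
        lra. }
    intros t _. unfold rkhs_norm. apply sqrt_le_1_alt. apply Ind. }
  split; [exact Part1|].
  intros eta1 th eta Hth He1 HV Hel Heta t Ht.
  assert (Hc : forall t, (1 <= t)%nat -> 0 < eta t /\ eta t <= / (L * kappa ^ 2)).
  { intros s Hs. rewrite (Heta s Hs). split.
    - apply Rmult_lt_0_compat; auto. apply Rpower_pos'.
    - assert (Rpower (INR s) (- th) <= 1).
      { assert (1 <= INR s) by (replace 1 with (INR 1) by reflexivity; apply le_INR; lia).
        rewrite <- (Rpower_O (INR s)) by lra. apply Rle_Rpower; lra. }
      pose proof (Rpower_pos' (INR s) (- th)). nra. }
  eapply Rle_trans. apply (Part1 eta Hc t Ht).
  assert (tpos : 0 < INR t) by (apply lt_0_INR; lia).
  assert (E : sum_lt t (fun k => eta (S k)) = eta1 * sum_lt t (fun k => Rpower (INR (S k)) (- th))).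
  { rewrite <- sum_lt_scal. apply sum_lt_ext. intros i _. apply Heta. lia. }
  rewrite E.
  pose proof (sum_pow_bound th Hth t Ht) as SB.
  set (S0 := sum_lt t (fun k => Rpower (INR (S k)) (- th))) in *.
  assert (S0nn : 0 <= S0).
  { unfold S0. replace 0 with (sum_lt t (fun _ => 0)) by (rewrite sum_lt_const; ring).
    apply sum_lt_le. intros; left; apply Rpower_pos'. }
  assert (B : 2 * V0 * (eta1 * S0) <= Rpower (INR t) (1 - th)).
  { replace (2 * V0 * (eta1 * S0)) with ((2 * V0 * eta1) * S0) by ring.
    eapply Rle_trans. apply Rmult_le_compat; [nra|exact S0nn|exact HV|exact SB].
    right. field. lra. }
  eapply Rle_trans. apply sqrt_le_1_alt. exact B.
  rewrite <- Rpower_sqrt by apply Rpower_pos'. rewrite Rpower_mult. right. f_equal.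
Qed.
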